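(* If $L \subseteq \Sigma^*$ is regular, then $\psi_L$ is a $\leftarrow$-transduction; in particular $\psi_L(\Sigma^* )$ and $\psi_L(L)$ are regular. Furthermore, $\psi_L$ is a $\leftarrow$-reduction from $L$ to $\psi_L(L)$.
   Context: The Myhill–Nerode congruence: $x\sim_L y$ iff for all $z\in\Sigma^*$, $xz\in L\iff yz\in L$ (finitely many classes for regular $L$). $\psi_L(a_1\cdots a_n)=[a_1\cdots a_n]_{\sim_L}[a_2\cdots a_n]_{\sim_L}\cdots[a_n]_{\sim_L}$, a word over the alphabet $\Sigma^*/{\sim_L}$. A Mealy machine $(Q,\Sigma,\Gamma,q_0,\delta)$ with finite $Q$ and $\delta\colon Q\times\Sigma\to Q\times\Gamma$ defines $\tau_q$ by $\tau_q(\varepsilon)=\varepsilon$, $\tau_p(bu)=c\,\tau_q(u)$ if $\delta(p,b)=(q,c)$; a $\leftarrow$-transduction is a map of the form $x\mapsto\tau_{q_0}(x^\mathsf{R})^\mathsf{R}$ ($^\mathsf{R}$ = word reversal). A $\leftarrow$-reduction from $K$ to $K'$ is a $\leftarrow$-transduction $\tau$ with $x\in K\iff\tau(x)\in K'$ for all $x$. *)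

(* Defs.v *)
From Stdlib Require List.
From mathcomp Require Import all_boot.
Set Implicit Arguments. Unset Strict Implicit. Unset Printing Implicit Defensive.

Definition lang (A : Type) := seq A -> Prop.

Definition over (A : Type) (Alph : seq A) (w : seq A) : Prop :=
  forall a, List.In a w -> List.In a Alph.

Definition dfa_accepts (A : Type) (Q : finType) (d : Q -> A -> Q) (q0 : Q)
  (F : pred Q) (w : seq A) : bool := F (foldl d q0 w).

Definition regular (A : Type) (K : lang A) : Prop :=
  exists (Alph : seq A),
    (forall w, K w -> over Alph w) /\
    exists (Q : finType) (q0 : Q) (d : Q -> A -> Q) (F : pred Q),
      forall w, over Alph w -> (K w <-> dfa_accepts d q0 F w).

Definition nerode (S : Type) (L : lang S) (x y : seq S) : Prop :=
  forall z, L (x ++ z) <-> L (y ++ z).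

Definition nclass (S : Type) (L : lang S) (x : seq S) : seq S -> Prop :=
  fun y => nerode L x y.

(* psi_L(a1...an) = [a1...an][a2...an]...[an] *)
Definition psi (S : Type) (L : lang S) (x : seq S) : seq (seq S -> Prop) :=
  [seq nclass L (drop i x) | i <- iota 0 (size x)].

Fixpoint mealy_out (S G : Type) (Q : Type) (delta : Q -> S -> Q * G)
  (p : Q) (u : seq S) : seq G :=
  match u with
  | [::] => [::]
  | b :: u' => let: (q, c) := delta p b in c :: mealy_out delta q u'
  end.

Definition left_transduction (S G : Type) (f : seq S -> seq G) : Prop :=
  exists (Q : finType) (q0 : Q) (delta : Q -> S -> Q * G),
    forall x, f x = rev (mealy_out delta q0 (rev x)).

Definition left_reduction (S G : Type) (f : seq S -> seq G)
  (K : lang S) (K' : lang G) : Prop :=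
  left_transduction f /\ forall x, K x <-> K' (f x).

Definition img_lang (S G : Type) (f : seq S -> seq G) (K : lang S) : lang G :=
  fun w => exists x, K x /\ w = f x.

(* Main.v *)
Require Import Defs.
From mathcomp Require Import all_boot.
From Stdlib Require Import ClassicalDescription FunctionalExtensionality PropExtensionality.
Set Implicit Arguments. Unset Strict Implicit. Unset Printing Implicit Defensive.

Definition mdelta (T S G : Type) (nxt : T -> S -> T) (out : T -> G) :=
  fun s a => (nxt s a, out (nxt s a)).

Fixpoint outs (T S G : Type) (nxt : T -> S -> T) (out : T -> G) s (u : seq S) : seq G :=
  match u with [::] => [:: out s] | a :: u' => out s :: outs nxt out (nxt s a) u' end.

Lemma size_outs (T S G : Type) (nxt : T -> S -> T) (out : T -> G) s u :
  size (outs nxt out s u) = (size u).+1.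
Proof. by elim: u s => [|a u IH] s //=; rewrite IH. Qed.

Lemma mealy_mdelta (T S G : Type) (nxt : T -> S -> T) (out : T -> G) s a u :
  mealy_out (mdelta nxt out) s (a :: u) = outs nxt out (nxt s a) u.
Proof. by elim: u s a => [|b u IH] s a //=; rewrite -IH. Qed.

Definition eqd (G : Type) (c1 c2 : G) : bool :=
  if excluded_middle_informative (c1 = c2) then true else false.

Lemma eqdP (G : Type) (c1 c2 : G) : eqd c1 c2 <-> c1 = c2.
Proof. rewrite /eqd; case: excluded_middle_informative => //. Qed.

Definition dd (S : finType) (T : finType) (G : Type) (nxt : T -> S -> T) (out : T -> G)
  (P : pred T) (St : option {set T}) (c : G) : option {set T} :=
  Some (match St with
        | None => [set s | P s && eqd (out s) c]
        | Some X => [set s | eqd (out s) c && [exists a, nxt s a \in X]] end).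

Definition Acc (S : finType) (T : finType) (nxt : T -> S -> T) (P : pred T) (init : T)
  (St : option {set T}) : bool :=
  match St with None => P init | Some X => [exists a, nxt init a \in X] end.

Lemma dd_inv (S : finType) (T : finType) (G : Type) (nxt : T -> S -> T) (out : T -> G)
  (P : pred T) (w : seq G) : w <> [::] ->
  exists X, foldl (dd nxt out P) None w = Some X /\
   forall s, s \in X <-> exists u, rev (outs nxt out s u) = w /\ P (foldl nxt s u).
Proof.
elim/last_ind: w => [//|v c IH] _.
rewrite foldl_rcons.
case: v IH => [|c' v'] IH.
  eexists; split; first reflexivity.
  move=> s; rewrite inE; split.
    by case/andP=> Ps /eqdP <-; exists [::].
  case=> [[|a u]] /= [].
    by rewrite /rev /= => [[<-]] Ps; rewrite Ps /=; apply/eqdP.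
  by move/(congr1 size); rewrite size_rev /= size_outs.
have [X [-> HX]] := IH (fun h => match h with end).
eexists; split; first reflexivity.
move=> s; rewrite inE; split.
  case/andP=> /eqdP <- /existsP [a /HX [u [Hu Pu]]].
  by exists (a :: u); rewrite /= rev_cons Hu.
case=> [[|a u]] /= [].
  by move/(congr1 size); rewrite size_rev /= size_rcons.
rewrite (rev_cons (out s)) -rcons_cons => /rcons_inj [Hu <-] Pu.
apply/andP; split; first by apply/eqdP.
by apply/existsP; exists a; apply/HX; exists u.
Qed.

Lemma acc_main (S : finType) (T : finType) (G : Type) (nxt : T -> S -> T) (out : T -> G)
  (P : pred T) (init : T) (w : seq G) :
  (exists x, rev (mealy_out (mdelta nxt out) init x) = w /\ P (foldl nxt init x)) <->
  Acc nxt P init (foldl (dd nxt out P) None w).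
Proof.
case: w => [|c w].
  split => /=.
    case=> [[|a x]] []; first by [].
    by rewrite mealy_mdelta => /(congr1 size); rewrite size_rev size_outs.
  by move=> H; exists [::].
have [X [-> HX]] := dd_inv nxt out P (fun h : c :: w = [::] => ltac:(discriminate h)).
rewrite /=; split.
  case=> [[|a x]] []; first by [].
  rewrite mealy_mdelta => Hx Px; apply/existsP; exists a; apply/HX.
  by exists x.
case/existsP=> a /HX [u [Hu Pu]]; exists (a :: u).
by rewrite mealy_mdelta.
Qed.

Lemma In_mem (T : eqType) (a : T) s : List.In a s <-> a \in s.
Proof.
elim: s => [|b s IH] //=; rewrite inE; split.
  by case=> [->|/IH ->]; rewrite ?eqxx ?orbT.
by case/orP=> [/eqP ->|/IH]; [left|right].
Qed.

Definition overb (T : eqType) (Alph : seq T) (w : seq T) := all (fun a => a \in Alph) w.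

Lemma overP (T : eqType) (Alph : seq T) w : Defs.over Alph w <-> overb Alph w.
Proof.
rewrite /over /overb; split.
  by move=> H; apply/allP => a /In_mem /H /In_mem.
by move/allP=> H a /In_mem /H /In_mem.
Qed.

Lemma In_rev (T : Type) (a : T) s : List.In a (rev s) -> List.In a s.
Proof.
elim: s => [|b s IH] //=; rewrite rev_cons -cats1 => /List.in_app_iff [/IH|[<-|[]]];
  by [right|left].
Qed.

Lemma In_mealy (T S G : Type) (nxt : T -> S -> T) (out : T -> G) s u c :
  List.In c (mealy_out (mdelta nxt out) s u) -> exists s', c = out s'.
Proof.
elim: u s => [|a u IH] s //=; case=> [<-|]; first by eexists.
exact: IH.
Qed.

Lemma In_map_ssr (A B : Type) (f : A -> B) x s : List.In x s -> List.In (f x) (map f s).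
Proof. by elim: s => [|y s IH] //= [->|/IH]; [left|right]. Qed.

Lemma psi_cons (S : Type) (L : lang S) a w : psi L (a :: w) = nclass L (a :: w) :: psi L w.
Proof.
rewrite /psi /=; congr (_ :: _).
by rewrite -add1n iotaDl -map_comp; apply: eq_map => i.
Qed.

Theorem lemma4p2 (Sigma : finType) (L : lang Sigma) :
  regular L ->
  left_transduction (psi L) /\
  regular (img_lang (psi L) (fun _ => True)) /\
  regular (img_lang (psi L) L) /\
  left_reduction (psi L) L (img_lang (psi L) L).
Proof.
case=> Alph [hAlph [Q0 [q0 [d [F hL]]]]].
pose T : finType := option {ffun Q0 -> Q0}.
pose stof (w : seq Sigma) : T := if overb Alph w then Some [ffun q => foldl d q w] else None.
pose nxt (s : T) (a : Sigma) : T :=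
  if s is Some f then (if a \in Alph then Some [ffun q => f (d q a)] else None) else None.
pose out (s : T) : seq Sigma -> Prop :=
  match s with
  | None => fun y => forall z, False <-> L (y ++ z)
  | Some f => fun y => forall z, (overb Alph z && F (foldl d (f q0) z)) <-> L (y ++ z) end.
pose P (s : T) : bool := if s is Some f then F (f q0) else false.
pose init := stof [::].
have nxt_stof w a : nxt (stof w) a = stof (a :: w).
  rewrite /stof /overb /=; case: (all _ w) => /=; last by rewrite andbF.
  rewrite andbT; case: (a \in Alph) => //; congr Some.
  by apply/ffunP => q; rewrite !ffunE.
have fin_stof r w : foldl nxt (stof w) r = stof (catrev r w).
  by elim: r w => [|a r IH] w //=; rewrite nxt_stof IH.
have Lw w z : L (w ++ z) <-> (overb Alph w && overb Alph z && F (foldl d q0 (w ++ z))).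
  split.
    move=> H; have /overP Ho := hAlph _ H.
    have [H1 _] := hL _ (hAlph _ H); move: (H1 H); rewrite /dfa_accepts => ->.
    by move: Ho; rewrite /overb all_cat => ->.
  case/andP=> /andP [o1 o2] Hf.
  have Ho : Defs.over Alph (w ++ z) by apply/overP; rewrite /overb all_cat; apply/andP.
  by apply/(hL _ Ho).
have L_P x : L x <-> P (stof x).
  have := Lw x [::]; rewrite cats0 /P /stof => ->.
  case: (overb Alph x) => /=; rewrite ?ffunE ?andbT //.
have out_stof w : out (stof w) = nclass L w.
  apply: functional_extensionality => y; apply: propositional_extensionality.
  rewrite /nclass /nerode /stof; case Ho: (overb Alph w) => /=.
    have E z : L (w ++ z) <-> (overb Alph z && F (foldl d ([ffun q => foldl d q w] q0) z)).
      by rewrite ffunE -foldl_cat; move: (Lw w z); rewrite Ho.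
    by split=> H z; move: (H z) (E z); tauto.
  have E z : L (w ++ z) <-> False by move: (Lw w z); rewrite Ho /= => ->.
  by split=> H z; move: (H z) (E z); tauto.
pose delta := mdelta nxt out.
have psi_gen r w : rev (mealy_out delta (stof w) r) ++ psi L w = psi L (catrev r w).
  elim: r w => [|a r IH] w //=.
  rewrite /delta /mdelta nxt_stof -/delta rev_cons cat_rcons out_stof -psi_cons.
  exact: IH.
have psiE x : psi L x = rev (mealy_out delta init (rev x)).
  have := psi_gen (rev x) [::]; have -> : psi L [::] = [::] by [].
  by rewrite cats0 -[catrev _ [::]]/(rev (rev x)) revK => <-.
have finE x : foldl nxt init (rev x) = stof x.
  by rewrite fin_stof -[catrev _ [::]]/(rev (rev x)) revK.
pose AlphG := map out (enum T).
have overG x : Defs.over AlphG (psi L x).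
  move=> c; rewrite psiE /delta => H; have H2 := In_rev H.
  case: (In_mealy H2) => s ->.
  by apply: In_map_ssr; apply/In_mem; rewrite mem_enum.
have trans : left_transduction (psi L) by exists T, init, delta.
have reg (K : seq Sigma -> Prop) (PP : pred T) :
    (forall x, K x <-> PP (stof x)) -> regular (img_lang (psi L) K).
  move=> HK; exists AlphG; split.
    by move=> w [x [_ ->]].
  exists (option {set T}), None, (dd nxt out PP), (Acc nxt PP init) => w _.
  rewrite /dfa_accepts -acc_main; split.
    case=> x [/HK Kx ->]; exists (rev x); rewrite -psiE finE; split=> //.
  case=> x [Hw Px]; exists (rev x); rewrite HK psiE revK Hw; split=> //.
  by rewrite -finE revK.
split=> //; split.
  by apply: (reg _ predT).
split; first by apply: (reg _ P).
split=> // x; split; first by move=> Lx; exists x.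
case=> y [Ly E].
case: x E => [|a x]; case: y Ly => [|b y] Ly //=; rewrite !psi_cons //.
case=> Hc _.
have : nclass L (b :: y) (b :: y) by move=> z.
rewrite -Hc => /(_ [::]); rewrite !cats0 => H; exact/H.
Qed.
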